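(* For every $n\in\mathbb{Z}$ and $x\in\mathbb{R}$, $$E_{n+1}^k(x)=e^{x}\,E_{-n}^k(-x).$$
   Context: Fix $k\ge 0$. Partial order on $\mathbb{Z}$: $j\triangleleft n$ iff either ($|j|<|n|$ and $|n|-|j|$ is a positive even integer) or ($|j|=|n|$ and $n<j$). Let $\delta_k(x)=|2\sin x|^{2k}$ and $(f,g)_k=\frac{1}{2\pi}\int_0^{2\pi} f(x)\overline{g(x)}\delta_k(x)\,dx$. The non-symmetric Heckman–Opdam polynomials $E_n^k$, $n\in\mathbb{Z}$, are the functions on $\mathbb{R}$ of the form $E_n^k(x)=e^{nx}+\sum_{j\triangleleft n}c_{n,j}e^{jx}$ (finite sum) such that $(E_n^k(i\,\cdot),e^{ij\,\cdot})_k=0$ for all $j\triangleleft n$. It is known that they are eigenfunctions of the Cherednik operator $T^k f(x)=f'(x)+2k\frac{f(x)-f(-x)}{1-e^{-2x}}-kf(x)$: $T^kE_n^k=\tilde n E_n^k$, where $\tilde n=n+k$ if $n\ge0$ and $\tilde n=n-k$ if $n<0$. *)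

(* Defs.v *)
From Stdlib Require Import Reals ZArith.
From Coquelicot Require Import Coquelicot.
Open Scope R_scope.

Definition tri (j n : Z) : Prop :=
  ((Z.abs j < Z.abs n)%Z /\ Z.Even (Z.abs n - Z.abs j)) \/
  (Z.abs j = Z.abs n /\ (n < j)%Z).

Definition zsum (N : nat) (f : Z -> C) : C :=
  sum_n (fun i : nat => f (Z.of_nat i - Z.of_nat N)%Z) (2 * N).

Definition cis (t : R) : C := (cos t, sin t).

(* The function x |-> sum_j c_j e^{j x} (x real), for coefficients supported in
   [-|n|, |n|] (which contains n and all j ◁ n). *)
Definition Efun (n : Z) (c : Z -> C) (x : R) : C :=
  zsum (Z.abs_nat n) (fun j => (c j * RtoC (exp (IZR j * x)))%C).

(* The same expression evaluated at i x : x |-> sum_j c_j e^{i j x}. *)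
Definition Efun_i (n : Z) (c : Z -> C) (x : R) : C :=
  zsum (Z.abs_nat n) (fun j => (c j * cis (IZR j * x))%C).

(* weight delta_k(x) = |2 sin x|^{2k}  (with 0^0 = 1) *)
Definition delta (k x : R) : R :=
  if Req_EM_T (sin x) 0 then (if Req_EM_T k 0 then 1 else 0)
  else Rpower (Rabs (2 * sin x)) (2 * k).

Definition inner (k : R) (f g : R -> C) : C :=
  (RtoC (/ (2 * PI)) *
   RInt (V := C_R_CompleteNormedModule)
     (fun x => (f x * Cconj (g x) * RtoC (delta k x))%C) 0 (2 * PI))%C.

(* c is the coefficient family of the non-symmetric Heckman-Opdam polynomial
   E_n^k(x) = e^{n x} + sum_{j ◁ n} c_{n,j} e^{j x}. *)
Definition is_HO (k : R) (n : Z) (c : Z -> C) : Prop :=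
  c n = RtoC 1 /\
  (forall j : Z, j <> n -> ~ tri j n -> c j = RtoC 0) /\
  (forall j : Z, tri j n ->
     inner k (Efun_i n c) (fun x => cis (IZR j * x)) = RtoC 0).

(* Main.v *)
Require Import Defs.
From Stdlib Require Import Reals ZArith Lia Lra Classical FunctionalExtensionality.
From Coquelicot Require Import Coquelicot.
Open Scope R_scope.

Lemma zsum_S (M : nat) (f : Z -> C) :
  zsum (S M) f = (f (- Z.of_nat (S M))%Z + zsum M f + f (Z.of_nat (S M)))%C.
Proof.
  unfold zsum, sum_n.
  replace (2 * S M)%nat with (S (S (2 * M))) by lia.
  rewrite sum_n_Sm by lia. rewrite sum_Sn_m by lia.
  rewrite <- sum_n_m_S.
  rewrite (sum_n_m_ext (fun n0 : nat => f (Z.of_nat (S n0) - Z.of_nat (S M))%Z)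
     (fun i : nat => f (Z.of_nat i - Z.of_nat M)%Z)).
  2:{ intros i; f_equal; lia. }
  replace (Z.of_nat 0 - Z.of_nat (S M))%Z with (- Z.of_nat (S M))%Z by lia.
  replace (Z.of_nat (S (S (2 * M))) - Z.of_nat (S M))%Z with (Z.of_nat (S M)) by lia.
  reflexivity.
Qed.

Lemma zsum_0 (f : Z -> C) : zsum 0 f = f 0%Z.
Proof. unfold zsum. simpl. rewrite sum_O. reflexivity. Qed.

Lemma zsum_ext (N : nat) (f g : Z -> C) :
  (forall j, (Z.abs j <= Z.of_nat N)%Z -> f j = g j) -> zsum N f = zsum N g.
Proof.
  intros H. unfold zsum. unfold sum_n. apply sum_n_m_ext_loc.
  intros k Hk. apply H. lia.
Qed.

Lemma zsum_widen (N M : nat) (f : Z -> C) :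
  (N <= M)%nat -> (forall j, (Z.of_nat N < Z.abs j)%Z -> f j = 0%C) ->
  zsum M f = zsum N f.
Proof.
  intros HNM Hf. induction HNM. reflexivity.
  rewrite zsum_S, IHHNM, !Hf by lia.
  unfold zsum. ring.
Qed.

Lemma zsum_reflect (N : nat) (f : Z -> C) :
  zsum N (fun j => f (- j)%Z) = zsum N f.
Proof.
  induction N. rewrite !zsum_0. reflexivity.
  rewrite !zsum_S, IHN. rewrite Z.opp_involutive. ring.
Qed.

Lemma zsum_shift (N : nat) (f : Z -> C) :
  (zsum N (fun j => f (j + 1)%Z) + f (- Z.of_nat N)%Z = zsum N f + f (Z.of_nat N + 1)%Z)%C.
Proof.
  induction N. rewrite !zsum_0. replace (- Z.of_nat 0)%Z with 0%Z by lia. replace (0+1)%Z with (Z.of_nat 0 + 1)%Z by lia. ring.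
  rewrite !zsum_S.
  assert (E1 : f (- Z.of_nat (S N) + 1)%Z = f (- Z.of_nat N)%Z) by (f_equal; lia).
  assert (E2 : f (Z.of_nat (S N) + 1)%Z = f (Z.of_nat N + 1 + 1)%Z) by (f_equal; lia).
  assert (E3 : f (Z.of_nat N + 1)%Z = f (Z.of_nat (S N))) by (f_equal; lia).
  rewrite E1, E2, <- E3.
  transitivity (f (- Z.of_nat (S N))%Z + (zsum N (fun j : Z => f (j + 1)%Z) + f (- Z.of_nat N)%Z) + f (Z.of_nat N + 1 + 1)%Z)%C.
  ring. rewrite IHN. ring.
Qed.

Lemma zsum_flip (N1 N2 : nat) (f : Z -> C) :
  (forall l, (Z.of_nat N2 < Z.abs l)%Z -> f l = 0%C) ->
  (forall m, (Z.of_nat N1 < Z.abs m)%Z -> f (1 - m)%Z = 0%C) ->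
  zsum N1 (fun m => f (1 - m)%Z) = zsum N2 f.
Proof.
  intros H2 H1. set (M := (N1 + N2 + 1)%nat).
  rewrite <- (zsum_widen N1 M) by (auto; lia).
  rewrite <- (zsum_widen N2 M) by (auto; lia).
  rewrite <- (zsum_reflect M (fun m => f (1 - m)%Z)).
  assert (E := zsum_shift M f).
  rewrite (H2 (- Z.of_nat M)%Z), (H2 (Z.of_nat M + 1)%Z) in E by lia.
  rewrite <- (zsum_ext M (fun j => f (j+1)%Z)) by (intros; f_equal; lia).
  transitivity (zsum M (fun j : Z => f (j + 1)%Z) + 0)%C. ring. rewrite E. ring.
Qed.
Lemma Even_mod (x : Z) : Z.Even x <-> (x mod 2 = 0)%Z.
Proof.
  split. intros [m Hm]. subst. rewrite Z.mul_comm, Z_mod_mult. reflexivity.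
  intros H. exists (x / 2)%Z. pose proof (Z.div_mod x 2). lia.
Qed.

Lemma tri_bound j n : tri j n -> (Z.abs j <= Z.abs n)%Z.
Proof. unfold tri. lia. Qed.

Lemma tri_flip j n : tri j (n + 1) <-> tri (1 - j) (- n).
Proof.
  unfold tri.
  destruct (Z.abs_spec j) as [[? ->]|[? ->]]; destruct (Z.abs_spec (n+1)) as [[? ->]|[? ->]];
  destruct (Z.abs_spec (1-j)) as [[? ->]|[? ->]]; destruct (Z.abs_spec (-n)) as [[? ->]|[? ->]];
  split; intros [[A [m B]]|[A B]];
  try lia;
  match goal with |- (?a < ?b)%Z /\ _ \/ _ => destruct (Z_lt_ge_dec a b) end;
  try first [ lia | right; split; lia | left; split; [lia | apply Even_mod; Z.div_mod_to_equations; lia] ].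
Qed.

Lemma HO_support k n c j : is_HO k n c -> c j <> RtoC 0 -> (Z.abs j <= Z.abs n)%Z.
Proof.
  intros [H1 [H2 H3]] Hc.
  destruct (Z.eq_dec j n). subst; lia.
  destruct (classic (tri j n)). now apply tri_bound.
  exfalso. apply Hc. now apply H2.
Qed.

Lemma zsum_mult_l (a : C) N (f : Z -> C) : (a * zsum N f)%C = zsum N (fun j => a * f j)%C.
Proof. unfold zsum. symmetry. apply (sum_n_mult_l (K := C_Ring)). Qed.

Lemma zsum_mult_r (a : C) N (f : Z -> C) : (zsum N f * a)%C = zsum N (fun j => f j * a)%C.
Proof. unfold zsum. symmetry. apply (sum_n_mult_r (K := C_Ring)). Qed.

Definition good (f : R -> C) : Prop :=
  forall x, continuity_pt (fun t => fst (f t)) x /\ continuity_pt (fun t => snd (f t)) x.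

Lemma cont_real (g : R -> R) x : continuity_pt g x -> continuous g x.
Proof. intros H. now apply continuity_pt_filterlim. Qed.

Lemma ex_RInt_real (g : R -> R) a b : (forall x, continuity_pt g x) -> ex_RInt g a b.
Proof. intros H. apply (ex_RInt_continuous (V := R_CompleteNormedModule)). intros. apply cont_real, H. Qed.

Lemma ex_RInt_good (f : R -> C) a b : good f -> ex_RInt (V := C_R_CompleteNormedModule) f a b.
Proof.
  intros H.
  apply (ex_RInt_fct_extend_pair (U := R_NormedModule) (V := R_NormedModule));
  apply ex_RInt_real; intros x; apply H.
Qed.

Lemma RInt_good (f : R -> C) a b : good f ->
  RInt (V := C_R_CompleteNormedModule) f a b =
  (RInt (fun t => fst (f t)) a b, RInt (fun t => snd (f t)) a b).
Proof.
  intros H. apply is_RInt_unique.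
  apply (is_RInt_fct_extend_pair (U := R_NormedModule) (V := R_NormedModule));
  apply (RInt_correct (V := R_CompleteNormedModule)); apply ex_RInt_real; intros x; apply H.
Qed.

Lemma good_ext (f g : R -> C) : good f -> (forall x, f x = g x) -> good g.
Proof.
  intros H E x. destruct (H x) as [H1 H2]. split.
  apply continuity_pt_ext with (f := fun t => fst (f t)); auto. intros; now rewrite E.
  apply continuity_pt_ext with (f := fun t => snd (f t)); auto. intros; now rewrite E.
Qed.

Lemma good_plus f g : good f -> good g -> good (fun x => f x + g x)%C.
Proof.
  intros Hf Hg x. destruct (Hf x) as [F1 F2]. destruct (Hg x) as [G1 G2]. split.
  apply continuity_pt_ext with (f := fun t => fst (f t) + fst (g t)). intros; reflexivity.
  apply (continuity_pt_plus (fun t => fst (f t)) (fun t => fst (g t))); auto.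
  apply continuity_pt_ext with (f := fun t => snd (f t) + snd (g t)). intros; reflexivity.
  apply (continuity_pt_plus (fun t => snd (f t)) (fun t => snd (g t))); auto.
Qed.

Lemma good_mult f g : good f -> good g -> good (fun x => f x * g x)%C.
Proof.
  intros Hf Hg x. destruct (Hf x) as [F1 F2]. destruct (Hg x) as [G1 G2]. split.
  apply continuity_pt_ext with (f := fun t => fst (f t) * fst (g t) - snd (f t) * snd (g t)). intros; reflexivity.
  apply (continuity_pt_minus (fun t => fst (f t) * fst (g t)) (fun t => snd (f t) * snd (g t)));
  [apply (continuity_pt_mult (fun t => fst (f t)) (fun t => fst (g t))) | apply (continuity_pt_mult (fun t => snd (f t)) (fun t => snd (g t)))]; auto.
  apply continuity_pt_ext with (f := fun t => fst (f t) * snd (g t) + snd (f t) * fst (g t)). intros; reflexivity.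
  apply (continuity_pt_plus (fun t => fst (f t) * snd (g t)) (fun t => snd (f t) * fst (g t)));
  [apply (continuity_pt_mult (fun t => fst (f t)) (fun t => snd (g t))) | apply (continuity_pt_mult (fun t => snd (f t)) (fun t => fst (g t)))]; auto.
Qed.

Lemma good_conj f : good f -> good (fun x => Cconj (f x)).
Proof.
  intros Hf x. destruct (Hf x) as [F1 F2]. split.
  apply continuity_pt_ext with (f := fun t => fst (f t)). intros; reflexivity. auto.
  apply continuity_pt_ext with (f := fun t => - snd (f t)). intros; reflexivity.
  apply (continuity_pt_opp (fun t => snd (f t))); auto.
Qed.

Lemma good_RtoC (g : R -> R) : (forall x, continuity_pt g x) -> good (fun x => RtoC (g x)).
Proof.
  intros Hg x. split. apply Hg.
  apply continuity_pt_const. intros a b. reflexivity.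
Qed.

Lemma good_const (c : C) : good (fun _ => c).
Proof. intros x. split; apply continuity_pt_const; intros a b; reflexivity. Qed.

Lemma good_cis (a : R) : good (fun x => cis (a * x)).
Proof.
  intros x. split.
  - apply continuity_pt_ext with (f := comp cos (fun t => a * t)). intros; reflexivity.
    apply continuity_pt_comp. reg. apply continuity_cos.
  - apply continuity_pt_ext with (f := comp sin (fun t => a * t)). intros; reflexivity.
    apply continuity_pt_comp. reg. apply continuity_sin.
Qed.

Lemma good_sum_n (G : nat -> R -> C) m : (forall i, good (G i)) ->
  good (fun x => sum_n (fun i => G i x) m).
Proof.
  intros H. induction m.
  - apply good_ext with (f := G 0%nat). apply H. intros; now rewrite sum_O.
  - apply good_ext with (f := fun x => (sum_n (fun i => G i x) m + G (S m) x)%C).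
    apply good_plus; auto. intros; now rewrite sum_Sn.
Qed.

Lemma good_zsum (F : Z -> R -> C) N : (forall j, good (F j)) ->
  good (fun x => zsum N (fun j => F j x)).
Proof. intros H. unfold zsum. apply (good_sum_n (fun i => F (Z.of_nat i - Z.of_nat N)%Z)). auto. Qed.

Definition phi (k y : R) : R := if Rlt_dec 0 y then Rpower y (2 * k) else 0.

Lemma phi_cont k y : 0 < k -> continuity_pt (phi k) y.
Proof.
  intros Hk. destruct (Rtotal_order y 0) as [Hy|[Hy|Hy]].
  - apply continuity_pt_locally_ext with (a := - y) (f := fun _ => 0). lra.
    intros z Hz. unfold phi, Rdist in *. destruct (Rlt_dec 0 z). 
    apply Rabs_def2 in Hz. lra. reflexivity.
    apply continuity_pt_const. intros a b; reflexivity.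
  - subst. intros eps Heps. exists (Rpower eps (/ (2 * k))). split.
    unfold Rpower; apply exp_pos.
    intros z [_ Hz]. simpl in *. unfold R_dist in *. unfold phi.
    destruct (Rlt_dec 0 0). lra. destruct (Rlt_dec 0 z).
    + rewrite Rminus_0_r in Hz |- *. rewrite Rabs_pos_eq in Hz by lra.
      rewrite Rabs_pos_eq by (unfold Rpower; left; apply exp_pos).
      replace eps with (Rpower (Rpower eps (/ (2 * k))) (2 * k)).
      apply Rlt_Rpower_l. lra. lra.
      rewrite Rpower_mult. replace (/ (2 * k) * (2 * k)) with 1 by (field; lra).
      apply Rpower_1; lra.
    + rewrite Rminus_0_r, Rabs_R0. lra.
  - apply continuity_pt_locally_ext with (a := y) (f := fun z => exp (2 * k * ln z)). lra.
    intros z Hz. unfold phi, Rdist in *. apply Rabs_def2 in Hz. destruct (Rlt_dec 0 z).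
    reflexivity. lra.
    apply continuity_pt_ext with (f := comp exp (fun z => 2 * k * ln z)). intros; reflexivity.
    apply continuity_pt_comp. 
    apply continuity_pt_ext with (f := mult_real_fct (2 * k) ln). intros; reflexivity.
    apply continuity_pt_scal. apply derivable_continuous_pt. exists (/ y). apply derivable_pt_lim_ln. lra.
    apply derivable_continuous_pt, derivable_pt_exp.
Qed.

Lemma delta_cont k x : 0 <= k -> continuity_pt (delta k) x.
Proof.
  intros Hk. destruct (Req_dec k 0) as [E|E].
  - subst. apply continuity_pt_const. intros a b. unfold delta.
    destruct (Req_EM_T (sin a) 0); destruct (Req_EM_T (sin b) 0); destruct (Req_EM_T 0 0);
    try lra; unfold Rpower; repeat rewrite Rmult_0_r; repeat rewrite Rmult_0_l; rewrite ?exp_0; reflexivity.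
  - apply continuity_pt_ext with (f := comp (phi k) (fun t => Rabs (2 * sin t))).
    intros t. unfold comp, phi, delta. destruct (Req_EM_T (sin t) 0).
    rewrite e. destruct (Rlt_dec 0 (Rabs (2*0))). rewrite Rmult_0_r, Rabs_R0 in r; lra.
    destruct (Req_EM_T k 0); [lra | reflexivity].
    destruct (Rlt_dec 0 (Rabs (2 * sin t))). reflexivity.
    exfalso. apply n0. apply Rabs_pos_lt. lra.
    apply continuity_pt_comp.
    apply continuity_pt_ext with (f := comp Rabs (fun t => 2 * sin t)). intros; reflexivity.
    apply continuity_pt_comp. reg. apply Rcontinuity_abs.
    apply phi_cont. lra.
Qed.

Definition contR (g : R -> R) := forall x, continuity_pt g x.

Lemma RInt_plus_R (f g : R -> R) a b : contR f -> contR g ->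
  RInt (fun t => f t + g t) a b = RInt f a b + RInt g a b.
Proof.
  intros Hf Hg. apply (RInt_plus (V := R_CompleteNormedModule)); apply ex_RInt_real; auto.
Qed.

Lemma RInt_minus_R (f g : R -> R) a b : contR f -> contR g ->
  RInt (fun t => f t - g t) a b = RInt f a b - RInt g a b.
Proof.
  intros Hf Hg. apply (RInt_minus (V := R_CompleteNormedModule)); apply ex_RInt_real; auto.
Qed.

Lemma RInt_scal_R (f : R -> R) c a b : contR f ->
  RInt (fun t => c * f t) a b = c * RInt f a b.
Proof.
  intros Hf. apply (RInt_scal (V := R_CompleteNormedModule)); apply ex_RInt_real; auto.
Qed.

Lemma RInt_flip_R (g : R -> R) L : contR g ->
  RInt g 0 L = RInt (fun x => g (L - x)) 0 L.
Proof.
  intros Hg.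
  assert (E := RInt_comp_lin (V := R_CompleteNormedModule) g (-1) L 0 L).
  replace (-1 * 0 + L) with L in E by ring. replace (-1 * L + L) with 0 in E by ring.
  rewrite <- (opp_RInt_swap (V := R_CompleteNormedModule)) by (apply ex_RInt_real; auto).
  rewrite <- E by (apply ex_RInt_real; auto).
  rewrite (RInt_scal (V := R_CompleteNormedModule)).
  2:{ apply ex_RInt_real. intros x.
      apply continuity_pt_ext with (f := comp g (fun y => -1 * y + L)). intros; reflexivity.
      apply continuity_pt_comp. reg. apply Hg. }
  change (- (-1 * RInt (fun y => g (-1 * y + L)) 0 L) = RInt (fun x => g (L - x)) 0 L).
  assert (Hr : forall r : R, - (-1 * r) = r) by (intros; ring). rewrite Hr.
  apply RInt_ext. intros. f_equal. ring.
Qed.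

Definition I (f : R -> C) : C := RInt (V := C_R_CompleteNormedModule) f 0 (2 * PI).

Lemma good_fst f : good f -> contR (fun t => fst (f t)).
Proof. intros H x; apply H. Qed.
Lemma good_snd f : good f -> contR (fun t => snd (f t)).
Proof. intros H x; apply H. Qed.

Lemma I_good f : good f -> I f = (RInt (fun t => fst (f t)) 0 (2*PI), RInt (fun t => snd (f t)) 0 (2*PI)).
Proof. apply RInt_good. Qed.

Lemma I_plus f g : good f -> good g -> I (fun x => f x + g x)%C = (I f + I g)%C.
Proof.
  intros Hf Hg. rewrite !I_good; auto using good_plus.
  unfold Cplus; simpl. f_equal; apply RInt_plus_R; auto using good_fst, good_snd.
Qed.

Lemma I_scal (a : C) f : good f -> I (fun x => a * f x)%C = (a * I f)%C.
Proof.
  intros Hf. rewrite !I_good; auto using good_mult, good_const.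
  unfold Cmult; simpl. f_equal.
  - rewrite RInt_minus_R. rewrite !RInt_scal_R; auto using good_fst, good_snd.
    intros x; apply continuity_pt_scal; apply Hf.
    intros x; apply continuity_pt_scal; apply Hf.
  - rewrite RInt_plus_R. rewrite !RInt_scal_R; auto using good_fst, good_snd.
    intros x; apply continuity_pt_scal; apply Hf.
    intros x; apply continuity_pt_scal; apply Hf.
Qed.

Lemma I_ext f g : (forall x, 0 < x < 2 * PI -> f x = g x) -> I f = I g.
Proof.
  intros H. unfold I. apply (RInt_ext (V := C_R_CompleteNormedModule)). intros x. rewrite Rmin_left, Rmax_right; auto.
  all: pose proof PI_RGT_0; lra.
Qed.

Lemma I_flip f : good f -> I f = I (fun x => f (2 * PI - x)).
Proof.
  intros Hf. rewrite !I_good; auto.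
  f_equal; apply RInt_flip_R; auto using good_fst, good_snd.
  apply good_ext with (f := fun x => f (comp (fun y => 2 * PI - y) (fun y => y) x)).
  intros x. split.
  apply continuity_pt_ext with (f := comp (fun t => fst (f t)) (fun y => 2 * PI - y)). intros; reflexivity.
  apply continuity_pt_comp. reg. apply Hf.
  apply continuity_pt_ext with (f := comp (fun t => snd (f t)) (fun y => 2 * PI - y)). intros; reflexivity.
  apply continuity_pt_comp. reg. apply Hf.
  intros; reflexivity.
Qed.

Lemma I_sum_n (G : nat -> R -> C) m : (forall i, good (G i)) ->
  I (fun x => sum_n (fun i => G i x) m) = sum_n (fun i => I (G i)) m.
Proof.
  intros H. induction m.
  - rewrite sum_O. apply I_ext. intros; now rewrite sum_O.
  - rewrite sum_Sn. rewrite <- IHm. rewrite <- I_plus; auto using good_sum_n.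
    apply I_ext. intros; now rewrite sum_Sn.
Qed.

Lemma I_zsum (F : Z -> R -> C) N : (forall j, good (F j)) ->
  I (fun x => zsum N (fun j => F j x)) = zsum N (fun j => I (F j)).
Proof. intros H. unfold zsum. apply (I_sum_n (fun i => F (Z.of_nat i - Z.of_nat N)%Z)). auto. Qed.

Lemma cis_mult a b : (cis a * cis b)%C = cis (a + b).
Proof. unfold cis, Cmult; simpl. rewrite cos_plus, sin_plus. f_equal; ring. Qed.

Lemma cis_conj a : Cconj (cis a) = cis (- a).
Proof. unfold cis, Cconj; simpl. rewrite cos_neg, sin_neg. reflexivity. Qed.

Lemma cos_periodZ a m : cos (a + 2 * IZR m * PI) = cos a.
Proof.
  destruct (Z_le_gt_dec 0 m).
  - rewrite <- (Z2Nat.id m) by lia. rewrite <- INR_IZR_INZ. apply cos_period.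
  - set (p := Z.to_nat (- m)). replace m with (- Z.of_nat p)%Z by lia.
    rewrite opp_IZR, <- INR_IZR_INZ.
    rewrite <- (cos_period (a + 2 * - INR p * PI) p). f_equal. ring.
Qed.

Lemma sin_periodZ a m : sin (a + 2 * IZR m * PI) = sin a.
Proof.
  destruct (Z_le_gt_dec 0 m).
  - rewrite <- (Z2Nat.id m) by lia. rewrite <- INR_IZR_INZ. apply sin_period.
  - set (p := Z.to_nat (- m)). replace m with (- Z.of_nat p)%Z by lia.
    rewrite opp_IZR, <- INR_IZR_INZ.
    rewrite <- (sin_period (a + 2 * - INR p * PI) p). f_equal. ring.
Qed.

Lemma cis_periodZ a m : cis (a + 2 * IZR m * PI) = cis a.
Proof. unfold cis. rewrite cos_periodZ, sin_periodZ. reflexivity. Qed.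

Lemma cis_refl (m : Z) y : cis (IZR m * (2 * PI - y)) = cis (- (IZR m * y)).
Proof. rewrite <- (cis_periodZ (- (IZR m * y)) m). f_equal. ring. Qed.

Lemma delta_refl k y : delta k (2 * PI - y) = delta k y.
Proof.
  unfold delta. assert (E : sin (2 * PI - y) = - sin y).
  { rewrite sin_minus, sin_2PI, cos_2PI. ring. }
  rewrite E. destruct (Req_EM_T (- sin y) 0); destruct (Req_EM_T (sin y) 0); try lra.
  all: try reflexivity. f_equal. rewrite <- Rabs_Ropp. f_equal. ring.
Qed.

Lemma zsum_zero N : zsum N (fun _ => 0%C) = 0%C.
Proof. induction N. now rewrite zsum_0. rewrite zsum_S, IHN. ring. Qed.

Lemma zsum_minus N f g : zsum N (fun j => f j - g j)%C = (zsum N f - zsum N g)%C.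
Proof. induction N. now rewrite !zsum_0. rewrite !zsum_S, IHN. ring. Qed.

Lemma zsum_conj N f : Cconj (zsum N f) = zsum N (fun j => Cconj (f j)).
Proof.
  induction N. now rewrite !zsum_0. rewrite !zsum_S, <- IHN, !Cplus_conj. reflexivity.
Qed.

Lemma zsum_delta N j0 (v : C) : (Z.abs j0 <= Z.of_nat N)%Z ->
  zsum N (fun j => if Z.eq_dec j j0 then v else 0%C) = v.
Proof.
  induction N; intros H.
  - rewrite zsum_0. destruct (Z.eq_dec 0 j0). reflexivity. lia.
  - rewrite zsum_S. destruct (Z_le_gt_dec (Z.abs j0) (Z.of_nat N)).
    + rewrite IHN by auto. destruct (Z.eq_dec (- Z.of_nat (S N)) j0); [lia|].
      destruct (Z.eq_dec (Z.of_nat (S N)) j0); [lia|]. ring.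
    + rewrite (zsum_ext N _ (fun _ => 0%C)), zsum_zero.
      2:{ intros j Hj. destruct (Z.eq_dec j j0); [lia|reflexivity]. }
      destruct (Z.eq_dec (- Z.of_nat (S N)) j0); destruct (Z.eq_dec (Z.of_nat (S N)) j0); try lia; ring.
Qed.

Lemma I_cis (l : Z) : I (fun x => cis (IZR l * x)) = if Z.eq_dec l 0 then RtoC (2 * PI) else 0%C.
Proof.
  rewrite I_good by apply good_cis. simpl.
  destruct (Z.eq_dec l 0).
  - subst. rewrite (RInt_ext (V := R_CompleteNormedModule) _ (fun _ => 1)).
    rewrite (RInt_ext (V := R_CompleteNormedModule) (fun t => sin (IZR 0 * t)) (fun _ => 0)).
    rewrite !(RInt_const (V := R_CompleteNormedModule)). unfold RtoC. simpl.
    change (scal (2 * PI - 0) 1) with ((2 * PI - 0) * 1). change (scal (2 * PI - 0) 0) with ((2 * PI - 0) * 0).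
    f_equal; ring.
    intros; rewrite Rmult_0_l; apply sin_0. intros; rewrite Rmult_0_l; apply cos_0.
  - assert (Hl : IZR l <> 0) by (apply not_0_IZR; auto).
    assert (S2 : sin (IZR l * (2 * PI)) = 0).
    { apply sin_eq_0_1. exists (2 * l)%Z. rewrite mult_IZR. ring. }
    assert (C2 : cos (IZR l * (2 * PI)) = 1).
    { rewrite <- cos_0. rewrite <- (cos_periodZ 0 l). f_equal. ring. }
    unfold RtoC. f_equal.
    + erewrite (is_RInt_unique (V := R_CompleteNormedModule)).
      2:{ apply (is_RInt_derive (V := R_CompleteNormedModule) (fun t => sin (IZR l * t) / IZR l)).
          * intros x _. auto_derive. auto. field. auto.
          * intros x _. apply cont_real. reg. }
      rewrite S2, Rmult_0_r, sin_0. change (0 / IZR l - 0 / IZR l = 0). field. auto.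
    + erewrite (is_RInt_unique (V := R_CompleteNormedModule)).
      2:{ apply (is_RInt_derive (V := R_CompleteNormedModule) (fun t => - cos (IZR l * t) / IZR l)).
          * intros x _. auto_derive. auto. field. auto.
          * intros x _. apply cont_real. reg. }
      rewrite C2, Rmult_0_r, cos_0. change (- 1 / IZR l - - 1 / IZR l = 0). field. auto.
Qed.

Lemma pos_int_zero (g : R -> R) L x0 : contR g -> (forall x, 0 <= g x) ->
  RInt g 0 L = 0 -> 0 < x0 < L -> g x0 = 0.
Proof.
  intros Hc Hp HI Hx. destruct (Hp x0) as [Hg|Hg]; [|auto]. exfalso.
  assert (Hc0 := Hc x0). unfold continuity_pt, continue_in, limit1_in, limit_in in Hc0.
  destruct (Hc0 (g x0 / 2)) as [alp [Halp Hal]]. lra.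
  simpl in Hal. unfold R_dist in Hal.
  set (h := Rmin alp (Rmin x0 (L - x0)) / 2).
  assert (Hh1 : 0 < h). { unfold h. apply Rmult_lt_0_compat; [|lra].
    apply Rmin_pos. lra. apply Rmin_pos; lra. }
  assert (Hh2 : h < alp /\ h < x0 /\ h < L - x0).
  { unfold h. pose proof (Rmin_l alp (Rmin x0 (L - x0))). pose proof (Rmin_r alp (Rmin x0 (L - x0))).
    pose proof (Rmin_l x0 (L - x0)). pose proof (Rmin_r x0 (L - x0)). lra. }
  assert (Ex : forall a b, ex_RInt g a b) by (intros; apply ex_RInt_real; auto).
  assert (E1 := RInt_Chasles (V := R_CompleteNormedModule) g 0 (x0 - h) L (Ex _ _) (Ex _ _)).
  assert (E2 := RInt_Chasles (V := R_CompleteNormedModule) g (x0 - h) (x0 + h) L (Ex _ _) (Ex _ _)).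
  change (RInt g 0 (x0 - h) + RInt g (x0 - h) L = RInt g 0 L) in E1.
  change (RInt g (x0 - h) (x0 + h) + RInt g (x0 + h) L = RInt g (x0 - h) L) in E2.
  assert (P1 : 0 <= RInt g 0 (x0 - h)) by (apply RInt_ge_0; auto; lra).
  assert (P3 : 0 <= RInt g (x0 + h) L) by (apply RInt_ge_0; auto; lra).
  assert (P2 : 0 < RInt g (x0 - h) (x0 + h)).
  { apply RInt_gt_0. lra.
    - intros x Hx'. destruct (Req_dec x x0). subst; auto.
      assert (Abs : Rabs (g x - g x0) < g x0 / 2).
      { apply Hal. split; [split; [constructor | intro E; apply H; symmetry; exact E] | apply Rabs_def1; lra]. }
      apply Rabs_def2 in Abs. lra.
    - intros; apply cont_real; auto. }
  lra.
Qed.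

Lemma delta_pos k x : sin x <> 0 -> 0 < delta k x.
Proof.
  intros H. unfold delta. destruct (Req_EM_T (sin x) 0). contradiction.
  unfold Rpower. apply exp_pos.
Qed.

Lemma delta_nonneg k x : 0 <= delta k x.
Proof.
  unfold delta. destruct (Req_EM_T (sin x) 0). destruct (Req_EM_T k 0); lra.
  unfold Rpower. left; apply exp_pos.
Qed.

Lemma good_delta k : 0 <= k -> good (fun x => RtoC (delta k x)).
Proof. intros Hk. apply good_RtoC. intros; now apply delta_cont. Qed.

Lemma norm_zero k (P : R -> C) : 0 <= k -> good P ->
  I (fun x => P x * Cconj (P x) * RtoC (delta k x))%C = 0%C ->
  forall x, 0 < x < 2 * PI -> sin x <> 0 -> P x = 0%C.
Proof.
  intros Hk HP HI x Hx Hs.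
  set (g := fun t => (fst (P t) ^ 2 + snd (P t) ^ 2) * delta k t).
  assert (Hg : contR g).
  { intros t. unfold g. apply (continuity_pt_mult (fun t => fst (P t) ^ 2 + snd (P t) ^ 2) (delta k)).
    apply (continuity_pt_plus (fun t => fst (P t) ^ 2) (fun t => snd (P t) ^ 2)).
    apply (continuity_pt_mult (fun t => fst (P t)) (fun t => fst (P t) * 1)). apply HP.
    apply (continuity_pt_mult (fun t => fst (P t)) (fun t => 1)). apply HP. apply continuity_pt_const; intros a b; reflexivity.
    apply (continuity_pt_mult (fun t => snd (P t)) (fun t => snd (P t) * 1)). apply HP.
    apply (continuity_pt_mult (fun t => snd (P t)) (fun t => 1)). apply HP. apply continuity_pt_const; intros a b; reflexivity.
    apply delta_cont; auto. }
  rewrite I_good in HI.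
  2:{ apply good_mult. apply good_mult. auto. apply good_conj; auto. apply good_delta; auto. }
  apply (f_equal fst) in HI. simpl in HI.
  rewrite (RInt_ext (V := R_CompleteNormedModule) _ g) in HI.
  2:{ intros t _. unfold g, Cmult, Cconj, RtoC. simpl. ring. }
  assert (G0 := pos_int_zero g (2 * PI) x Hg).
  assert (Hd := delta_pos k x Hs).
  unfold g in G0. 
  assert (Z : fst (P x) ^ 2 + snd (P x) ^ 2 = 0).
  { assert (G1 : (fst (P x) ^ 2 + snd (P x) ^ 2) * delta k x = 0).
    apply G0; auto. intros t. apply Rmult_le_pos. nra. apply delta_nonneg.
    apply Rmult_integral in G1. lra. }
  destruct (P x) as [a b]. simpl in Z. unfold RtoC. f_equal; nra.
Qed.

Lemma inner_zero k f g : inner k f g = 0%C ->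
  I (fun x => f x * Cconj (g x) * RtoC (delta k x))%C = 0%C.
Proof.
  intros H. unfold inner in H.
  change (RtoC (/ (2 * PI)) * I (fun x => f x * Cconj (g x) * RtoC (delta k x)) = 0)%C in H.
  set (X := I _) in *.
  replace X with (RtoC (2 * PI) * (RtoC (/ (2 * PI)) * X))%C.
  rewrite H. ring.
  rewrite Cmult_assoc, <- RtoC_mult, Rinv_r. ring. pose proof PI_RGT_0; lra.
Qed.

Lemma I_minus f g : good f -> good g -> I (fun x => f x - g x)%C = (I f - I g)%C.
Proof.
  intros Hf Hg. rewrite !I_good; auto.
  2:{ apply good_plus; auto. apply good_ext with (f := fun x => (RtoC (-1) * g x)%C).
      apply good_mult; auto using good_const. intros; ring. }
  unfold Cminus, Cplus, Copp; simpl. f_equal; apply RInt_minus_R; auto using good_fst, good_snd.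
Qed.

Lemma RInt_zero_split (g : R -> R) : contR g ->
  (forall x, 0 < x < 2 * PI -> sin x <> 0 -> g x = 0) -> RInt g 0 (2 * PI) = 0.
Proof.
  intros Hc H. pose proof PI_RGT_0.
  rewrite <- (RInt_Chasles (V := R_CompleteNormedModule) g 0 PI (2 * PI)) by (apply ex_RInt_real; auto).
  rewrite (RInt_ext (V := R_CompleteNormedModule) g (fun _ => 0) 0 PI).
  rewrite (RInt_ext (V := R_CompleteNormedModule) g (fun _ => 0) PI (2 * PI)).
  rewrite !(RInt_const (V := R_CompleteNormedModule)).
  change ((PI - 0) * 0 + (2 * PI - PI) * 0 = 0). ring.
  - intros x. rewrite Rmin_left, Rmax_right by lra. intros Hx. apply H. lra.
    pose proof (sin_lt_0 x). lra.
  - intros x. rewrite Rmin_left, Rmax_right by lra. intros Hx. apply H. lra.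
    pose proof (sin_gt_0 x). lra.
Qed.

Lemma I_zero_split f : good f ->
  (forall x, 0 < x < 2 * PI -> sin x <> 0 -> f x = 0%C) -> I f = 0%C.
Proof.
  intros Hf H. rewrite I_good by auto. unfold RtoC. f_equal; apply RInt_zero_split;
  auto using good_fst, good_snd; intros x Hx Hs; rewrite H; auto.
Qed.

Lemma good_trig N (e : Z -> C) : good (fun x => zsum N (fun j => e j * cis (IZR j * x)))%C.
Proof.
  apply (good_zsum (fun j x => e j * cis (IZR j * x))%C). intros j.
  apply good_mult. apply good_const. apply good_cis.
Qed.

Lemma coef_zero N (e : Z -> C) :
  (forall x, 0 < x < 2 * PI -> sin x <> 0 -> zsum N (fun j => e j * cis (IZR j * x))%C = 0%C) ->
  forall j0, (Z.abs j0 <= Z.of_nat N)%Z -> e j0 = 0%C.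
Proof.
  intros H j0 Hj0.
  assert (H0 : I (fun x => zsum N (fun j => e j * cis (IZR j * x)) * cis (IZR (- j0) * x))%C = 0%C).
  { apply I_zero_split. apply good_mult. apply good_trig. apply good_cis.
    intros x Hx Hs. rewrite H by auto. ring. }
  rewrite (I_ext _ (fun x => zsum N (fun j => e j * cis (IZR (j - j0) * x)))%C) in H0.
  2:{ intros x _. rewrite zsum_mult_r. apply zsum_ext. intros j _.
      rewrite <- Cmult_assoc, cis_mult. f_equal. f_equal. rewrite minus_IZR, opp_IZR. ring. }
  rewrite (I_zsum (fun j x => e j * cis (IZR (j - j0) * x))%C) in H0.
  2:{ intros j. apply good_mult. apply good_const. apply good_cis. }
  rewrite (zsum_ext N _ (fun j => if Z.eq_dec j j0 then (e j0 * RtoC (2 * PI))%C else 0%C)) in H0.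
  2:{ intros j _. rewrite I_scal by apply good_cis. rewrite I_cis.
      destruct (Z.eq_dec (j - j0) 0); destruct (Z.eq_dec j j0); try lia. subst; reflexivity. ring. }
  rewrite zsum_delta in H0 by auto.
  replace (e j0) with (e j0 * RtoC (2 * PI) * RtoC (/ (2 * PI)))%C.
  rewrite H0. ring.
  rewrite <- Cmult_assoc, <- RtoC_mult, Rinv_r. ring. pose proof PI_RGT_0; lra.
Qed.

Lemma Cconj_0 : Cconj 0%C = 0%C.
Proof. unfold Cconj, RtoC; simpl. rewrite Ropp_0. reflexivity. Qed.

Lemma HO_unique k m c c' : 0 <= k -> is_HO k m c -> is_HO k m c' -> forall j, c j = c' j.
Proof.
  intros Hk Hc Hc'.
  set (N := Z.abs_nat m). set (e := fun j => (c j - c' j)%C).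
  set (P := fun x => zsum N (fun j => e j * cis (IZR j * x))%C).
  assert (HP : good P) by apply good_trig.
  assert (Hdiff : forall x, P x = (Efun_i m c x - Efun_i m c' x)%C).
  { intros x. unfold P, Efun_i. fold N. rewrite <- zsum_minus. apply zsum_ext. intros; unfold e; ring. }
  assert (Hgood : forall (F : R -> C) j, good F -> good (fun x => F x * Cconj (cis (IZR j * x)) * RtoC (delta k x))%C).
  { intros F j HF. apply good_mult. apply good_mult. auto. apply good_conj, good_cis. apply good_delta; auto. }
  assert (HE : forall cc, good (Efun_i m cc)).
  { intros cc. apply good_trig. }
  assert (Horth : forall j, tri j m -> I (fun x => P x * Cconj (cis (IZR j * x)) * RtoC (delta k x))%C = 0%C).
  { intros j Hj. destruct Hc as [_ [_ Hc3]]. destruct Hc' as [_ [_ Hc3']].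
    specialize (Hc3 j Hj). specialize (Hc3' j Hj). apply inner_zero in Hc3. apply inner_zero in Hc3'. cbv beta in Hc3, Hc3'.
    rewrite (I_ext _ (fun x => (Efun_i m c x * Cconj (cis (IZR j * x)) * RtoC (delta k x)) - (Efun_i m c' x * Cconj (cis (IZR j * x)) * RtoC (delta k x)))%C).
    rewrite I_minus, Hc3, Hc3'. ring. apply Hgood; auto. apply Hgood; auto.
    intros x _. rewrite Hdiff. ring. }
  assert (Hnorm : I (fun x => P x * Cconj (P x) * RtoC (delta k x))%C = 0%C).
  { rewrite (I_ext _ (fun x => zsum N (fun j => Cconj (e j) * (P x * Cconj (cis (IZR j * x)) * RtoC (delta k x))))%C).
    2:{ intros x _.
        assert (Hcj : Cconj (P x) = zsum N (fun j => Cconj (e j) * Cconj (cis (IZR j * x)))%C).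
        { unfold P. rewrite zsum_conj. apply zsum_ext. intros; apply Cmult_conj. }
        rewrite Hcj, zsum_mult_l, zsum_mult_r. apply zsum_ext. intros; ring. }
    rewrite (I_zsum (fun j x => Cconj (e j) * (P x * Cconj (cis (IZR j * x)) * RtoC (delta k x)))%C).
    2:{ intros j. apply good_mult. apply good_const. apply Hgood; auto. }
    rewrite <- (zsum_zero N). apply zsum_ext. intros j _.
    rewrite I_scal by (apply Hgood; auto).
    destruct (classic (e j = 0%C)) as [Ej|Ej].
    - rewrite Ej, Cconj_0. ring.
    - destruct (classic (tri j m)) as [T|T].
      + rewrite Horth by auto. ring.
      + exfalso. apply Ej. unfold e. destruct Hc as [Hc1 [Hc2 _]]. destruct Hc' as [Hc1' [Hc2' _]].
        destruct (Z.eq_dec j m). subst. rewrite Hc1, Hc1'. ring.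
        rewrite Hc2, Hc2' by auto. ring. }
  assert (HPz := norm_zero k P Hk HP Hnorm).
  assert (Hez := coef_zero N e HPz).
  intros j. destruct (Z_le_gt_dec (Z.abs j) (Z.of_nat N)).
  - specialize (Hez j l). unfold e in Hez.
    replace (c j) with ((c j - c' j) + c' j)%C by ring. rewrite Hez. ring.
  - unfold N in g. rewrite Nat2Z.inj_abs_nat in g.
    destruct (classic (c j = RtoC 0)) as [E1|E1]; destruct (classic (c' j = RtoC 0)) as [E2|E2].
    + congruence.
    + apply (HO_support k m c' j Hc') in E2. lia.
    + apply (HO_support k m c j Hc) in E1. lia.
    + apply (HO_support k m c j Hc) in E1. lia.
Qed.

Lemma HO_support_flip k n c2 m : is_HO k (- n)%Z c2 -> c2 (1 - m)%Z <> RtoC 0 ->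
  (Z.abs m <= Z.abs (n + 1))%Z.
Proof.
  intros [H1 [H2 _]] Hc.
  destruct (Z.eq_dec (1 - m) (- n)). lia.
  destruct (classic (tri (1 - m) (- n))) as [T|T].
  apply tri_flip in T. now apply tri_bound.
  exfalso. apply Hc. now apply H2.
Qed.

Lemma inner_refl k n c2 j : 0 <= k -> is_HO k (- n)%Z c2 ->
  inner k (Efun_i (n + 1) (fun l => c2 (1 - l)%Z)) (fun x => cis (IZR j * x)) =
  inner k (Efun_i (- n) c2) (fun x => cis (IZR (1 - j) * x)).
Proof.
  intros Hk H2. unfold inner. f_equal.
  change (I (fun x => Efun_i (n + 1) (fun l => c2 (1 - l)%Z) x * Cconj (cis (IZR j * x)) * RtoC (delta k x))%C =
          I (fun x => Efun_i (- n) c2 x * Cconj (cis (IZR (1 - j) * x)) * RtoC (delta k x))%C).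
  rewrite I_flip.
  2:{ apply good_mult. apply good_mult. apply good_trig. apply good_conj, good_cis. apply good_delta; auto. }
  apply I_ext. intros y _. rewrite delta_refl, !cis_conj.
  set (f := fun l => (c2 l * cis ((IZR l - 1) * y))%C).
  assert (E1 : Efun_i (n + 1) (fun l => c2 (1 - l)%Z) (2 * PI - y) = zsum (Z.abs_nat (n + 1)) (fun m => f (1 - m)%Z)).
  { unfold Efun_i. apply zsum_ext. intros m _. unfold f. rewrite cis_refl. f_equal. f_equal.
    rewrite minus_IZR. ring. }
  rewrite E1, (zsum_flip _ (Z.abs_nat (- n))).
  - assert (E2 : zsum (Z.abs_nat (- n)) f = (Efun_i (- n) c2 y * cis (- y))%C).
    { unfold Efun_i. rewrite zsum_mult_r. apply zsum_ext. intros l _. unfold f.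
      rewrite <- Cmult_assoc, cis_mult. f_equal. f_equal. ring. }
    rewrite E2.
    assert (E3 : cis (- (IZR j * (2 * PI - y))) = cis (IZR j * y)).
    { rewrite <- (cis_periodZ (IZR j * y) (- j)). f_equal. rewrite opp_IZR. ring. }
    rewrite E3, <- (Cmult_assoc (Efun_i (- n) c2 y)), cis_mult. f_equal. f_equal. f_equal.
    rewrite minus_IZR. ring.
  - intros l Hl. unfold f. destruct (classic (c2 l = RtoC 0)) as [E|E].
    rewrite E. ring. apply (HO_support k (- n) c2 l H2) in E. rewrite Nat2Z.inj_abs_nat in Hl. lia.
  - intros m Hm. unfold f. destruct (classic (c2 (1 - m)%Z = RtoC 0)) as [E|E].
    rewrite E. ring. apply (HO_support_flip k n c2 m H2) in E. rewrite Nat2Z.inj_abs_nat in Hm. lia.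
Qed.

Lemma coef_eq k n c1 c2 : 0 <= k -> is_HO k (n + 1)%Z c1 -> is_HO k (- n)%Z c2 ->
  forall j, c1 j = c2 (1 - j)%Z.
Proof.
  intros Hk H1 H2.
  assert (Hd : is_HO k (n + 1)%Z (fun l => c2 (1 - l)%Z)).
  { destruct H2 as [A [B C]]. split; [|split].
    - replace (1 - (n + 1))%Z with (- n)%Z by lia. auto.
    - intros j Hj Ht. apply B. lia. rewrite <- tri_flip. auto.
    - intros j Hj. rewrite inner_refl; auto. apply C. now apply tri_flip.
      split; auto. }
  intros j. apply (HO_unique k (n + 1)%Z c1 (fun l => c2 (1 - l)%Z) Hk H1 Hd).
Qed.

Theorem mainTheorem2 :
  forall (k : R), 0 <= k ->
  forall (n : Z) (c1 c2 : Z -> C),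
    is_HO k (n + 1)%Z c1 -> is_HO k (- n)%Z c2 ->
    forall x : R,
      Efun (n + 1)%Z c1 x = (RtoC (exp x) * Efun (- n)%Z c2 (- x))%C.
Proof.
  intros k Hk n c1 c2 H1 H2 x.
  pose proof (coef_eq k n c1 c2 Hk H1 H2) as Hc.
  set (f := fun l => (c2 l * RtoC (exp ((1 - IZR l) * x)))%C).
  unfold Efun.
  transitivity (zsum (Z.abs_nat (n + 1)) (fun m => f (1 - m)%Z)).
  { apply zsum_ext. intros j _. unfold f. rewrite Hc. f_equal. f_equal. f_equal.
    rewrite minus_IZR. ring. }
  rewrite (zsum_flip _ (Z.abs_nat (- n))).
  - rewrite zsum_mult_l. apply zsum_ext. intros l _.
    unfold f.
    replace ((1 - IZR l) * x) with (x + IZR l * - x) by ring.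
    rewrite exp_plus, RtoC_mult. ring.
  - intros l Hl. unfold f. destruct (classic (c2 l = RtoC 0)) as [E|E].
    rewrite E. ring. apply (HO_support k (-n) c2 l H2) in E. rewrite Nat2Z.inj_abs_nat in Hl. lia.
  - intros m Hm. unfold f. rewrite <- Hc. destruct (classic (c1 m = RtoC 0)) as [E|E].
    rewrite E. ring. apply (HO_support k (n+1) c1 m H1) in E. rewrite Nat2Z.inj_abs_nat in Hm. lia.
Qed.
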